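(* Let $0<\tau_1\le\dots\le\tau_n$, set $\tau_{n+1}=\infty$, and let $S\ge\frac14$. Define $$j_1^*=\inf\Big\{m\in[n]: S\Big(\sum_{i=1}^m\frac1{\tau_i}\Big)^{-1}<\tau_{m+1}\Big\},\qquad t_1=S\Big(\sum_{i=1}^{j_1^*}\frac1{\tau_i}\Big)^{-1},$$ $$t_2=\min_{j\in[n]}\Big[\Big(\sum_{i=1}^j\frac1{\tau_i}\Big)^{-1}(S+j)\Big].$$ Then $t_1\le t_2\le6t_1$.
   Context: $[n]=\{1,\dots,n\}$. The set defining $j_1^*$ is nonempty since $\tau_{n+1}=\infty$. *)

(* Defs.v *)
From mathcomp Require Import all_boot all_order all_algebra.
Set Implicit Arguments. Unset Strict Implicit. Unset Printing Implicit Defensive.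
Import Order.TTheory GRing.Theory Num.Theory.
Local Open Scope ring_scope.

(* tau : nat -> R, only tau 1, ..., tau n are used (1-based indices). *)
Definition Hsum (R : realFieldType) (tau : nat -> R) (m : nat) : R :=
  \sum_(1 <= i < m.+1) (tau i)^-1.

(* The predicate defining j_1^* : m in [n] and S (H m)^-1 < tau_{m+1},
   with the convention tau_{n+1} = +infinity (so m = n always qualifies). *)
Definition j1_pred (R : realFieldType) (n : nat) (tau : nat -> R) (S : R)
  (m : nat) : bool :=
  (1 <= m <= n)%N && ((m == n) || (S / Hsum tau m < tau m.+1)).

Lemma j1_pred_ex (R : realFieldType) (n : nat) (tau : nat -> R) (S : R) :
  (0 < n)%N -> exists m, j1_pred n tau S m.
Proof. by move=> hn; exists n; rewrite /j1_pred hn leqnn eqxx. Qed.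

(* j_1^* = inf {...}; defined for n >= 1 (else 0, irrelevant). *)
Definition j1star (R : realFieldType) (n : nat) (tau : nat -> R) (S : R) : nat :=
  match ltnP 0 n with
  | LtnNotGeq hn => ex_minn (j1_pred_ex tau S hn)
  | GeqNotLtn _ => 0%N
  end.

Definition t1 (R : realFieldType) (n : nat) (tau : nat -> R) (S : R) : R :=
  S / Hsum tau (j1star n tau S).

Definition t2 (R : realFieldType) (n : nat) (tau : nat -> R) (S : R) : R :=
  \big[Num.min/ (Hsum tau 1)^-1 * (S + 1)]_(1 <= j < n.+1)
     ((Hsum tau j)^-1 * (S + j%:R)).

(* Main.v *)
Require Import Defs.
From mathcomp Require Import all_boot all_order all_algebra.
From mathcomp Require Import ring lra.
Set Implicit Arguments. Unset Strict Implicit.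
Import Order.TTheory GRing.Theory Num.Theory.
Local Open Scope ring_scope.

Lemma j1star_spec (R : realFieldType) (n : nat) (tau : nat -> R) (S : R) :
  (1 <= n)%N -> j1_pred n tau S (j1star n tau S) /\
   forall m, j1_pred n tau S m -> (j1star n tau S <= m)%N.
Proof.
move=> hn; rewrite /j1star; case: ltnP => [h|h]; last by rewrite leqNgt ltnS h in hn.
by case: ex_minnP.
Qed.

Lemma Hsum_split (R : realFieldType) (tau : nat -> R) a b : (a <= b)%N ->
  Hsum tau b = Hsum tau a + \sum_(a.+1 <= i < b.+1) (tau i)^-1.
Proof.
by move=> hab; rewrite /Hsum -big_cat_nat.
Qed.

Lemma Hsum_pos (R : realFieldType) n (tau : nat -> R) m :
  (forall i, (1 <= i <= n)%N -> 0 < tau i) -> (1 <= m <= n)%N -> 0 < Hsum tau m.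
Proof.
move=> hp /andP[h1 h2]; rewrite (Hsum_split tau h1) /Hsum big_nat1.
apply: ltr_pwDl; first by rewrite invr_gt0; apply: hp; rewrite (leq_trans h1 h2).
rewrite big_nat_cond; apply: sumr_ge0 => i /andP[/andP[hi1 hi2] _]; rewrite invr_ge0 ltW //; apply: hp.
rewrite (leq_trans _ hi1) //=; rewrite ltnS in hi2; exact: leq_trans hi2 h2.
Qed.

Lemma tail_bound (R : realFieldType) (tau : nat -> R) a b c :
  (forall i, (a <= i < b)%N -> (tau i)^-1 <= c) ->
  \sum_(a <= i < b) (tau i)^-1 <= c *+ (b - a).
Proof.
move=> h; rewrite -sumr_const_nat; apply: ler_sum_nat => i hi; exact: h.
Qed.

Theorem mainTheorem14 (R : realFieldType) (n : nat) (tau : nat -> R) (S : R) :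
  (1 <= n)%N ->
  (forall i, (1 <= i <= n)%N -> 0 < tau i) ->
  (forall i j, (1 <= i)%N -> (i <= j)%N -> (j <= n)%N -> tau i <= tau j) ->
  1 / 4 <= S ->
  t1 n tau S <= t2 n tau S /\ t2 n tau S <= 6 * t1 n tau S.
Proof.
move=> hn hpos hmono hS.
have S0 : 0 < S by apply: lt_le_trans hS; lra.
have [hj hmin] := j1star_spec tau S hn.
rewrite /t1 /t2; set j := j1star n tau S in hj hmin *.
move: (hj) => /andP[/andP[j1 jn] hjc].

have Hjp : 0 < Hsum tau j by apply: (Hsum_pos hpos); rewrite j1 jn.
have tpos : forall i, (1 <= i <= n)%N -> 0 < tau i := hpos.
have low : forall k, (1 <= k <= n)%N ->
    S / Hsum tau j <= (Hsum tau k)^-1 * (S + k%:R).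
  move=> k /andP[k1 kn].
  have Hk : 0 < Hsum tau k by apply: (Hsum_pos hpos); rewrite k1 kn.
  rewrite [X in _ <= X]mulrC ler_pdivrMr // mulrAC ler_pdivlMr //.
  have k0 : (0 : R) <= k%:R by rewrite ler0n.
  case: (leqP k j) => hkj.
    have : Hsum tau k <= Hsum tau j.
      rewrite (Hsum_split tau hkj) lerDl big_nat_cond.
      apply: sumr_ge0 => i /andP[/andP[hi1 hi2] _]; rewrite invr_ge0 ltW //.
      apply: hpos; rewrite (leq_trans _ hi1) //=; rewrite ltnS in hi2.
      exact: leq_trans hi2 jn.
    move=> hle; nra.
  have jnn : (j != n) by rewrite neq_ltn (leq_trans hkj kn).
  move: hjc; rewrite (negbTE jnn) /= => hjc.
  have a0 : 0 < tau j.+1 by apply: hpos; rewrite /= (leq_trans hkj kn).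
  move: hjc; rewrite ltr_pdivrMr // => hjc.
  set a := tau j.+1 in a0 hjc.
  set T := \sum_(j.+1 <= i < k.+1) (tau i)^-1.
  have hT : T <= a^-1 *+ (k.+1 - j.+1).
    apply: tail_bound => i /andP[hi1 hi2].
    rewrite lef_pV2 ?posrE //; last by apply: hpos; rewrite (leq_trans _ hi1) //= -ltnS (leq_trans hi2).
    apply: hmono => //; rewrite -ltnS (leq_trans hi2) //.
  rewrite subSS -mulr_natr natrB ?(ltnW hkj) // in hT.
  have hu : S * a^-1 <= Hsum tau j.
    rewrite -ler_pdivlMr ?invr_gt0 // invrK mulrC; exact: ltW.
  have jk : (j%:R : R) <= k%:R by rewrite ler_nat ltnW.
  have j0 : (0 : R) <= j%:R by rewrite ler0n.
  have ua : 0 < a^-1 by rewrite invr_gt0.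
  rewrite (Hsum_split tau (ltnW hkj)) -/T.
  have : S * T <= S * (a^-1 * (k%:R - j%:R)) by rewrite ler_pM2l.
  nra.
split.
- rewrite big_nat_cond; apply: le_bigmin.
    by have := low 1%N; rewrite hn; apply.
  by move=> i /andP[/andP[i1 i2] _]; apply: low; rewrite i1 -ltnS i2.
- have jS : (j%:R : R) <= S + 1.
    case: (leqP j 1) => hj1.
      by apply: (le_trans (y:=1)); [rewrite -[X in _ <= X]/(1%:R : R) ler_nat // | rewrite lerDr ltW].
    pose m := j.-1.
    have hjm : j = m.+1 by rewrite /m prednK // (leq_trans _ hj1).
    have m1 : (1 <= m)%N by rewrite -ltnS -hjm.
    have mn : (m < n)%N by rewrite -hjm.
    have npm : ~~ j1_pred n tau S m.
      apply/negP => /hmin; rewrite hjm ltnn //.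
    move: npm; rewrite /j1_pred m1 (ltnW mn) /= (ltn_eqF mn) /= -leNgt.
    have Hm : 0 < Hsum tau m by apply: (Hsum_pos hpos); rewrite m1 ltnW.
    rewrite ler_pdivlMr // -hjm => htj.
    have tj : 0 < tau j by apply: hpos; rewrite j1 jn.
    have : (tau j)^-1 *+ m <= Hsum tau m.
      apply: (le_trans (y := \sum_(1 <= i < m.+1) (tau j)^-1)); first by rewrite sumr_const_nat subSS subn0.
      apply: ler_sum_nat => i /andP[i1 i2].
      rewrite lef_pV2 ?posrE //; last by apply: hpos; rewrite i1 /=; rewrite ltnS in i2; exact: leq_trans i2 (ltnW mn).
      apply: hmono => //; rewrite hjm ltnW //.
    move=> hh.
    have : m%:R <= tau j * Hsum tau m.
      have : tau j * ((tau j)^-1 * m%:R) <= tau j * Hsum tau m.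
        by rewrite (ler_pM2l tj) mulr_natr.
      by rewrite mulrA mulfV ?gt_eqF // mul1r.
    move=> hm; have := le_trans hm htj; rewrite hjm -addn1 natrD; lra.
  apply: (le_trans (y := (Hsum tau j)^-1 * (S + j%:R))).
    apply: ge_bigmin_seq => //; rewrite mem_index_iota j1 ltnS jn //.
  rewrite mulrC [X in _ <= X]mulrA [X in _ <= X]mulrC [X in _ <= X]mulrC.
  rewrite ler_pM2r ?invr_gt0 //; lra.
Qed.
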